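(* For every $\varepsilon>0$ and $\eta>0$ there exists $\delta>0$ such that \[ \sup_{n\ge1}\Pr\Bigl[\sup_{0\le t\le\delta}\bigl|n^{-1/2}\Delta_{\lfloor 2nt\rfloor}\bigr|>\varepsilon\ \Big|\ BINGO(n,n)\Bigr]\le\eta. \]
   Context: Fix $\alpha>1$. Let $(X_k,Y_k)_{k\ge2}$ be the Markov chain on $\mathbb N\times\mathbb N$ with $(X_2,Y_2)=(1,1)$ and, from state $(i,j)$, moving to $(i+1,j)$ with probability $i^\alpha/(i^\alpha+j^\alpha)$ and to $(i,j+1)$ with probability $j^\alpha/(i^\alpha+j^\alpha)$ (so $X_k+Y_k=k$). $BINGO(n,n)$ is the event $(X_{2n},Y_{2n})=(n,n)$. Set $\Delta_k=X_k-Y_k$ for $k\ge2$ and $\Delta_0=\Delta_1=0$. *)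

(* Defs.v *)
From Stdlib Require Import Reals Lra Lia ZArith List ClassicalEpsilon.
Import ListNotations.
Open Scope R_scope.

(* A trajectory of the chain from time 2 to time 2+m is a list of m booleans:
   true = X increments, false = Y increments. *)

Definition step_prob (a : R) (i j : nat) (b : bool) : R :=
  (if b then Rpower (INR i) a else Rpower (INR j) a)
  / (Rpower (INR i) a + Rpower (INR j) a).

Fixpoint path_prob (a : R) (i j : nat) (p : list bool) : R :=
  match p with
  | nil => 1
  | b :: q => step_prob a i j b *
              path_prob a (if b then S i else i) (if b then j else S j) q
  end.

(* probability of the trajectory p started at (X_2,Y_2) = (1,1) *)
Definition weight (a : R) (p : list bool) : R := path_prob a 1 1 p.

Fixpoint all_paths (m : nat) : list (list bool) :=
  match m with
  | O => [nil]
  | S m' => map (cons true) (all_paths m') ++ map (cons false) (all_paths m')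
  end.

Definition count_b (b : bool) (s : list bool) : nat :=
  count_occ Bool.bool_dec s b.

(* Delta_k = X_k - Y_k for k >= 2 (after k-2 steps), and Delta_0 = Delta_1 = 0 *)
Definition DeltaXY (p : list bool) (k : nat) : Z :=
  (Z.of_nat (count_b true (firstn (k - 2) p))
   - Z.of_nat (count_b false (firstn (k - 2) p)))%Z.

(* BINGO(n,n): (X_{2n},Y_{2n}) = (n,n), for a trajectory of 2n-2 steps *)
Definition bingo (n : nat) (p : list bool) : Prop :=
  count_b true p = (n - 1)%nat.

Definition probE (a : R) (n : nat) (E : list bool -> Prop) : R :=
  fold_right Rplus 0
    (map (fun p => if excluded_middle_informative (E p) then weight a p else 0)
         (all_paths (2 * n - 2))).

(* conditional probability P[E | BINGO(n,n)], E depending on times <= 2n *)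
Definition condPr (a : R) (n : nat) (E : list bool -> Prop) : R :=
  probE a n (fun p => bingo n p /\ E p) / probE a n (bingo n).

(* Main.v *)
Require Import Defs.
From Stdlib Require Import Reals ZArith.
From Stdlib Require Import Lra Lia List Permutation ClassicalEpsilon.
Import ListNotations.
Open Scope R_scope.

Definition sumL (l : list (list bool)) (f : list bool -> R) : R :=
  fold_right Rplus 0 (map f l).

Lemma sumL_nil f : sumL [] f = 0. Proof. reflexivity. Qed.
Lemma sumL_cons x l f : sumL (x :: l) f = f x + sumL l f. Proof. reflexivity. Qed.

Lemma sumL_app l1 l2 f : sumL (l1 ++ l2) f = sumL l1 f + sumL l2 f.
Proof. induction l1; unfold sumL in *; simpl; [lra|]. rewrite IHl1; lra. Qed.

Lemma sumL_map g l f : sumL (map g l) f = sumL l (fun x => f (g x)).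
Proof. induction l; [reflexivity|]. unfold sumL in *; simpl; rewrite IHl; reflexivity. Qed.

Lemma sumL_plus l f g : sumL l (fun x => f x + g x) = sumL l f + sumL l g.
Proof. induction l; unfold sumL in *; simpl; [lra|]. rewrite IHl; lra. Qed.

Lemma sumL_scal l c f : sumL l (fun x => c * f x) = c * sumL l f.
Proof. induction l; unfold sumL in *; simpl; [lra|]. rewrite IHl; lra. Qed.

Lemma sumL_le l f g : (forall x, In x l -> f x <= g x) -> sumL l f <= sumL l g.
Proof. induction l; intros H; unfold sumL in *; simpl; [lra|].
  assert (f a <= g a) by (apply H; simpl; auto).
  assert (fold_right Rplus 0 (map f l) <= fold_right Rplus 0 (map g l)) by (apply IHl; intros; apply H; simpl; auto).
  lra. Qed.

Lemma sumL_ext l f g : (forall x, In x l -> f x = g x) -> sumL l f = sumL l g.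
Proof. intros H; apply Rle_antisym; apply sumL_le; intros x Hx; rewrite H; auto; lra. Qed.

Lemma sumL_nonneg l f : (forall x, In x l -> 0 <= f x) -> 0 <= sumL l f.
Proof. intros H. replace 0 with (sumL l (fun _ => 0)).
  apply sumL_le; auto. induction l; unfold sumL in *; simpl; auto. rewrite IHl; [lra|]. intros; apply H; simpl; auto. Qed.

Lemma sumL_ge_elt l f x : (forall y, In y l -> 0 <= f y) -> In x l -> f x <= sumL l f.
Proof. induction l; intros H Hx; [inversion Hx|]. rewrite sumL_cons. destruct Hx as [<-|Hx].
  - assert (0 <= sumL l f) by (apply sumL_nonneg; intros; apply H; simpl; auto). lra.
  - assert (0 <= f a) by (apply H; simpl; auto). assert (f x <= sumL l f) by (apply IHl; auto; intros; apply H; simpl; auto). lra. Qed.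

Lemma sumL_perm l1 l2 f : Permutation l1 l2 -> sumL l1 f = sumL l2 f.
Proof. induction 1; unfold sumL in *; simpl; try lra. Qed.

Lemma all_paths_S m f : sumL (all_paths (S m)) f =
  sumL (all_paths m) (fun t => f (true :: t)) + sumL (all_paths m) (fun t => f (false :: t)).
Proof. simpl. rewrite sumL_app, !sumL_map. reflexivity. Qed.

Lemma all_paths_split r m f : sumL (all_paths (r + m)) f =
  sumL (all_paths r) (fun q => sumL (all_paths m) (fun u => f (q ++ u))).
Proof. revert f; induction r; intros f.
  - change (all_paths 0) with [@nil bool]. rewrite sumL_cons, sumL_nil. simpl app. rewrite Rplus_0_r. apply sumL_ext; auto.
  - change (S r + m)%nat with (S (r + m)). rewrite !all_paths_S, !IHr. reflexivity. Qed.

Lemma In_all_paths m x : In x (all_paths m) <-> length x = m.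
Proof. revert x; induction m; intros x; simpl.
  - split; [intros [<-|[]]; auto | destruct x; simpl; try discriminate; auto].
  - rewrite in_app_iff, !in_map_iff. split.
    + intros [[y [<- Hy]]|[y [<- Hy]]]; simpl; f_equal; apply IHm; auto.
    + destruct x as [|b y]; simpl; intros H; [discriminate|]. injection H as H.
      destruct b; [left|right]; exists y; split; auto; apply IHm; auto. Qed.

Lemma NoDup_all_paths m : NoDup (all_paths m).
Proof. induction m; simpl. constructor; [simpl; auto| constructor].
  apply NoDup_app; try apply FinFun.Injective_map_NoDup; auto;
   try (intros x y H; injection H; auto).
  intros x Hx Hx'. apply in_map_iff in Hx, Hx'. destruct Hx as [y [<- _]]; destruct Hx' as [z [H _]]; discriminate. Qed.

Lemma sum_invol m (phi : list bool -> list bool) f :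
  (forall x, phi (phi x) = x) -> (forall x, length (phi x) = length x) ->
  sumL (all_paths m) f = sumL (all_paths m) (fun x => f (phi x)).
Proof. intros Hi Hl. rewrite <- (sumL_map phi (all_paths m) f). apply sumL_perm. apply Permutation_sym.
  apply NoDup_Permutation. apply FinFun.Injective_map_NoDup. intros x y H.
  rewrite <- (Hi x), <- (Hi y), H; auto. apply NoDup_all_paths. apply NoDup_all_paths.
  intros x. rewrite in_map_iff, In_all_paths. split.
  - intros [y [<- Hy]]. rewrite Hl; apply In_all_paths in Hy; auto.
  - intros H. exists (phi x). rewrite Hi; split; auto. apply In_all_paths. rewrite Hl; auto. Qed.

Lemma conv_aux a L u v H : 1 <= a -> 0 < L -> L <= u -> u <= v -> v <= H -> u + v = L + H ->
  Rpower u a + Rpower v a <= Rpower L a + Rpower H a.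
Proof. intros Ha HL H1 H2 H3 Hs.
  destruct (Req_dec u L) as [E|E].
  { assert (v = H) by lra. subst; lra. }
  assert (HLu : L < u) by lra.
  set (f' := fun x => a * Rpower x (a - 1)).
  assert (D : forall x, 0 < x -> derivable_pt_lim (fun y => Rpower y a) x (f' x)).
  { intros; apply derivable_pt_lim_power; auto. }
  destruct (MVT_cor2 (fun y => Rpower y a) f' L u HLu) as [c1 [E1 I1]].
  { intros; apply D; lra. }
  destruct (MVT_cor2 (fun y => Rpower y a) f' v H) as [c2 [E2 I2]]. lra.
  { intros; apply D; lra. }
  assert (f' c1 <= f' c2).
  { unfold f'. apply Rmult_le_compat_l. lra. apply Rle_Rpower_l; lra. }
  assert (u - L = H - v) by lra.
  assert (f' c1 * (u - L) <= f' c2 * (H - v)).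
  { rewrite H4. apply Rmult_le_compat_r; lra. }
  lra. Qed.

Lemma conv a L u v H : 1 <= a -> 0 < L -> L <= u -> u <= H -> L <= v -> v <= H -> u + v = L + H ->
  Rpower u a + Rpower v a <= Rpower L a + Rpower H a.
Proof. intros. destruct (Rle_dec u v).
  - apply conv_aux; auto.
  - rewrite Rplus_comm. apply conv_aux; lra. Qed.

Lemma count_cons_t b q : count_b true (b :: q) = ((if b then 1 else 0) + count_b true q)%nat.
Proof. destruct b; reflexivity. Qed.
Lemma count_cons_f b q : count_b false (b :: q) = ((if b then 0 else 1) + count_b false q)%nat.
Proof. destruct b; reflexivity. Qed.
Lemma count_app b q u : count_b b (q ++ u) = (count_b b q + count_b b u)%nat.
Proof. unfold count_b; apply count_occ_app. Qed.
Lemma count_len q : (count_b true q + count_b false q)%nat = length q.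
Proof. induction q as [|b q IH]; [reflexivity|]. rewrite count_cons_t, count_cons_f; destruct b; simpl; lia. Qed.
Lemma count_negb_t q : count_b true (map negb q) = count_b false q.
Proof. induction q as [|b q IH]; [reflexivity|]. simpl map. rewrite count_cons_t, count_cons_f, IH; destruct b; reflexivity. Qed.
Lemma count_negb_f q : count_b false (map negb q) = count_b true q.
Proof. induction q as [|b q IH]; [reflexivity|]. simpl map. rewrite count_cons_t, count_cons_f, IH; destruct b; reflexivity. Qed.

Lemma Dpos a i j : 0 < Rpower (INR i) a + Rpower (INR j) a.
Proof. unfold Rpower. pose proof (exp_pos (a * ln (INR i))); pose proof (exp_pos (a * ln (INR j))); lra. Qed.

Lemma step_pos a i j b : 0 < step_prob a i j b.
Proof. unfold step_prob. apply Rdiv_lt_0_compat; [|apply Dpos]. destruct b; unfold Rpower; apply exp_pos. Qed.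

Lemma pp_pos a p : forall i j, 0 < path_prob a i j p.
Proof. induction p; intros; simpl; [lra|]. apply Rmult_lt_0_compat; auto using step_pos. Qed.

Lemma pp_app a q u : forall i j, path_prob a i j (q ++ u) =
  path_prob a i j q * path_prob a (i + count_b true q) (j + count_b false q) u.
Proof. induction q as [|b q IH]; intros i j.
  - simpl. rewrite !Nat.add_0_r. ring.
  - rewrite count_cons_t, count_cons_f. cbn [app path_prob]. rewrite IH.
    destruct b; simpl Nat.add; rewrite ?Nat.add_succ_r, ?Nat.add_0_r; ring. Qed.

Lemma step_negb a i j b : step_prob a i j (negb b) = step_prob a j i b.
Proof. unfold step_prob; destruct b; simpl; rewrite Rplus_comm; reflexivity. Qed.

Lemma pp_negb a p : forall i j, path_prob a i j (map negb p) = path_prob a j i p.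
Proof. induction p as [|b p IH]; intros; simpl; auto. rewrite step_negb, IH. destruct b; reflexivity. Qed.

Fixpoint den (a : R) (i j : nat) (p : list bool) : R :=
  match p with nil => 1
  | b :: q => / (Rpower (INR i) a + Rpower (INR j) a) * den a (if b then S i else i) (if b then j else S j) q end.
Fixpoint Fp (a : R) (x k : nat) : R :=
  match k with O => 1 | S k => Rpower (INR x) a * Fp a (S x) k end.

Lemma pp_numden a p : forall i j, path_prob a i j p =
  Fp a i (count_b true p) * Fp a j (count_b false p) * den a i j p.
Proof. induction p as [|b p IH]; intros; [simpl; ring|].
  simpl path_prob. rewrite IH, count_cons_t, count_cons_f. pose proof (Dpos a i j).
  unfold step_prob. destruct b; simpl; field; lra. Qed.

Lemma den_pos a p : forall i j, 0 < den a i j p.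
Proof. induction p; intros; simpl; [lra|]. apply Rmult_lt_0_compat; auto. apply Rinv_0_lt_compat, Dpos. Qed.

Definition sgn (b : bool) : Z := if b then 1%Z else (-1)%Z.

Fixpoint posp (c : Z) (q : list bool) : Prop :=
  match q with nil => True | b :: t => (0 <= c)%Z /\ posp (c + sgn b) t end.

Lemma den_cmp a (Ha : 1 <= a) i j (Hij : (j <= i)%nat) (Hj : (1 <= j)%nat) q : forall x y,
  posp (Z.of_nat x - Z.of_nat y) q ->
  den a (i + x) (j + y) q <= den a (i + y) (j + x) (map negb q).
Proof. induction q as [|b q IH]; intros x y Hp; simpl; [lra|]. destruct Hp as [H0 Hp].
  apply Rmult_le_compat. apply Rlt_le, Rinv_0_lt_compat, Dpos. apply Rlt_le, den_pos.
  - apply Rinv_le_contravar. apply Dpos.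
    rewrite (Rplus_comm (Rpower (INR (i + x)) a)). assert (Hyx : (y <= x)%nat) by lia. apply le_INR in Hij, Hj, Hyx. simpl in Hj.
    pose proof (pos_INR x); pose proof (pos_INR y).
    apply conv; auto; rewrite ?plus_INR; try lra.
  - destruct b; simpl negb.
    + replace (S (i + x)) with (i + S x)%nat by lia. replace (S (j + x)) with (j + S x)%nat by lia.
      apply IH. replace (Z.of_nat (S x) - Z.of_nat y)%Z with (Z.of_nat x - Z.of_nat y + sgn true)%Z by (unfold sgn; lia). auto.
    + replace (S (j + y)) with (j + S y)%nat by lia. replace (S (i + y)) with (i + S y)%nat by lia.
      apply IH. replace (Z.of_nat x - Z.of_nat (S y))%Z with (Z.of_nat x - Z.of_nat y + sgn false)%Z by (unfold sgn; lia). auto.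
Qed.

Definition disp (q : list bool) : Z := (Z.of_nat (count_b true q) - Z.of_nat (count_b false q))%Z.

Lemma disp_cons b q : disp (b :: q) = (sgn b + disp q)%Z.
Proof. unfold disp. rewrite count_cons_t, count_cons_f. destruct b; unfold sgn; lia. Qed.
Lemma disp_app q u : disp (q ++ u) = (disp q + disp u)%Z.
Proof. unfold disp. rewrite !count_app. lia. Qed.
Lemma disp_negb q : disp (map negb q) = (- disp q)%Z.
Proof. unfold disp. rewrite count_negb_t, count_negb_f. lia. Qed.
Lemma sgn_negb b : sgn (negb b) = (- sgn b)%Z.
Proof. destruct b; reflexivity. Qed.

Fixpoint fr (c : Z) (u : list bool) : option nat :=
  match u with nil => None
  | b :: t => if Z.eqb (c + sgn b) 0 then Some 1%nat else option_map S (fr (c + sgn b) t) end.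

Definition rho (u : list bool) : list bool :=
  match fr 0 u with Some k => map negb (firstn k u) ++ skipn k u | None => u end.

Lemma fr_le u : forall c k, fr c u = Some k -> (1 <= k <= length u)%nat.
Proof. induction u as [|b t IH]; intros c k H; simpl in H; [discriminate|].
  destruct (Z.eqb_spec (c + sgn b) 0). injection H as <-; simpl; lia.
  destruct (fr (c + sgn b) t) eqn:E; simpl in H; [|discriminate]. injection H as <-.
  apply IH in E. simpl; lia. Qed.

Lemma fr_disp u : forall c k, fr c u = Some k -> (c + disp (firstn k u) = 0)%Z.
Proof. induction u as [|b t IH]; intros c k H; simpl in H; [discriminate|].
  destruct (Z.eqb_spec (c + sgn b) 0). injection H as <-; simpl. rewrite disp_cons. simpl. unfold disp; simpl. lia.
  destruct (fr (c + sgn b) t) eqn:E; simpl in H; [|discriminate]. injection H as <-.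
  apply IH in E. simpl firstn. rewrite disp_cons. lia. Qed.

Lemma fr_negb u : forall c k, fr c u = Some k -> forall rest, fr (- c) (map negb (firstn k u) ++ rest) = Some k.
Proof. induction u as [|b t IH]; intros c k H rest; simpl in H; [discriminate|].
  destruct (Z.eqb_spec (c + sgn b) 0).
  - injection H as <-; simpl. rewrite sgn_negb. replace (- c + - sgn b)%Z with (- (c + sgn b))%Z by lia.
    rewrite e. reflexivity.
  - destruct (fr (c + sgn b) t) eqn:E; simpl in H; [|discriminate]. injection H as <-.
    simpl. rewrite sgn_negb. replace (- c + - sgn b)%Z with (- (c + sgn b))%Z by lia.
    destruct (Z.eqb_spec (- (c + sgn b)) 0). lia. rewrite (IH _ _ E). reflexivity. Qed.

Lemma rho_invol u : rho (rho u) = u.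
Proof. unfold rho at 2. destruct (fr 0 u) eqn:E; [|unfold rho; rewrite E; auto].
  unfold rho. pose proof (fr_negb _ _ _ E (skipn n u)) as F. simpl in F. rewrite F.
  pose proof (fr_le _ _ _ E). 
  assert (length (map negb (firstn n u)) = n) by (rewrite length_map, length_firstn; lia).
  rewrite firstn_app, skipn_app, H0, Nat.sub_diag, (firstn_all2 (map negb (firstn n u))), (skipn_all2 (map negb (firstn n u))) by lia. simpl.
  rewrite app_nil_r, map_map.
  rewrite (map_ext _ (fun x => x)) by (intros []; auto). rewrite map_id. apply firstn_skipn. Qed.

Lemma rho_len u : length (rho u) = length u.
Proof. unfold rho. destruct (fr 0 u) eqn:E; auto. rewrite length_app, length_map, <- length_app, firstn_skipn. auto. Qed.

Lemma rho_count u : count_b true (rho u) = count_b true u.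
Proof. unfold rho. destruct (fr 0 u) eqn:E; auto.
  pose proof (fr_disp _ _ _ E). rewrite <- (firstn_skipn n u) at 3.
  rewrite !count_app, count_negb_t. unfold disp in H. lia. Qed.

Lemma fr_pos u : forall c k, (0 < c)%Z -> fr c u = Some k -> posp c (firstn k u).
Proof. induction u as [|b t IH]; intros c k Hc H; simpl in H; [discriminate|].
  destruct (Z.eqb_spec (c + sgn b) 0). injection H as <-; simpl; split; auto; lia.
  destruct (fr (c + sgn b) t) eqn:E; simpl in H; [|discriminate]. injection H as <-.
  simpl. split. lia. apply IH; auto. destruct b; unfold sgn in *; lia. Qed.

Lemma fr_exists t : forall c, (0 < c)%Z -> (c + disp t <= 0)%Z -> exists k, fr c t = Some k.
Proof. induction t as [|b t IH]; intros c Hc H. unfold disp in H; simpl in H; lia.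
  simpl. destruct (Z.eqb_spec (c + sgn b) 0). eauto.
  rewrite disp_cons in H. destruct (IH (c + sgn b)%Z) as [k Hk]. destruct b; unfold sgn in *; lia. lia.
  rewrite Hk; simpl; eauto. Qed.

Lemma pp_rho a (Ha : 1 <= a) i j (Hij : (j <= i)%nat) (Hj : (1 <= j)%nat) t k :
  fr 0 (true :: t) = Some k -> path_prob a i j (true :: t) <= path_prob a i j (rho (true :: t)).
Proof. intros E. unfold rho. rewrite E. set (u := true :: t) in *.
  pose proof (fr_disp _ _ _ E) as Hd. set (q := firstn k u) in *.
  rewrite <- (firstn_skipn k u) at 1. fold q. rewrite !pp_app, count_negb_t, count_negb_f.
  unfold disp in Hd. assert (count_b true q = count_b false q) by lia. rewrite H.
  apply Rmult_le_compat_r. apply Rlt_le, pp_pos.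
  rewrite !pp_numden, count_negb_t, count_negb_f, H. apply Rmult_le_compat_l.
  { pose proof (pp_numden a q i j). pose proof (pp_pos a q i j). pose proof (den_pos a q i j).
    rewrite H in H0. nra. }
  pose proof (den_cmp a Ha i j Hij Hj q 0 0) as C. rewrite !Nat.add_0_r in C. apply C.
  simpl. unfold q. simpl in E. destruct (fr 1 t) eqn:F; simpl in E; [|discriminate]. injection E as <-.
  simpl. split. lia. apply fr_pos; auto. lia. Qed.

Definition xi (u : list bool) : R := match u with nil => 0 | b :: _ => IZR (sgn b) end.

Definition Aterm a i j tgt (u : list bool) : R :=
  if Nat.eqb (count_b true u) tgt then path_prob a i j u * xi u else 0.

Lemma rho_head u k : fr 0 u = Some k -> xi (rho u) = - xi u.
Proof. intros E. pose proof (fr_le _ _ _ E). unfold rho. rewrite E. destruct u as [|b t]; simpl in H; [lia|].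
  destruct k; [lia|]. simpl. rewrite sgn_negb, opp_IZR. reflexivity. Qed.

Lemma drift a (Ha : 1 <= a) i j (Hij : (j <= i)%nat) (Hj : (1 <= j)%nat) m tgt :
  (2 * tgt <= m)%nat -> sumL (all_paths m) (Aterm a i j tgt) <= 0.
Proof. intros Hm.
  assert (E2 : 2 * sumL (all_paths m) (Aterm a i j tgt) =
    sumL (all_paths m) (fun u => Aterm a i j tgt u + Aterm a i j tgt (rho u))).
  { rewrite sumL_plus, <- (sum_invol m rho); auto using rho_invol, rho_len. lra. }
  assert (sumL (all_paths m) (fun u => Aterm a i j tgt u + Aterm a i j tgt (rho u)) <= 0).
  { replace 0 with (sumL (all_paths m) (fun _ => 0)).
    2:{ clear; induction (all_paths m); unfold sumL in *; simpl; auto. rewrite IHl; lra. }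
    apply sumL_le. intros u Hu. apply In_all_paths in Hu.
    unfold Aterm. rewrite rho_count. destruct (Nat.eqb_spec (count_b true u) tgt); [|lra].
    destruct (fr 0 u) eqn:E.
    - rewrite (rho_head _ _ E). destruct u as [|b t]. simpl; lra.
      destruct b; simpl xi; simpl IZR.
      + pose proof (pp_rho a Ha i j Hij Hj t n E). lra.
      + assert (E' : fr 0 (rho (false :: t)) = Some n).
        { unfold rho at 1. rewrite E. pose proof (fr_negb _ _ _ E (skipn n (false :: t))). simpl in H. exact H. }
        assert (exists t', rho (false :: t) = true :: t') as [t' Ht'].
        { pose proof (fr_le _ _ _ E). unfold rho. rewrite E. destruct n; [lia|]. simpl. eauto. }
        rewrite Ht' in E'. pose proof (pp_rho a Ha i j Hij Hj t' n E'). rewrite <- Ht', rho_invol in H. lra.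
    - unfold rho. rewrite E. destruct u as [|b t]. simpl; lra. destruct b.
      + exfalso. assert (Hd : disp (true :: t) = (2 * Z.of_nat tgt - Z.of_nat m)%Z).
        { unfold disp. pose proof (count_len (true :: t)). rewrite Hu in H. lia. }
        rewrite disp_cons in Hd. destruct (fr_exists t 1) as [k Hk]. lia. unfold sgn in Hd. lia.
        simpl in E. rewrite Hk in E. discriminate.
      + simpl xi. simpl IZR. pose proof (pp_pos a (false :: t) i j). lra. }
  lra. Qed.

Lemma drift' a (Ha : 1 <= a) i j (Hij : (i <= j)%nat) (Hi : (1 <= i)%nat) m tgt :
  (m <= 2 * tgt)%nat -> 0 <= sumL (all_paths m) (Aterm a i j tgt).
Proof. intros Hm. destruct (Nat.le_gt_cases tgt m).
  - rewrite (sum_invol m (map negb)).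
    2:{ intros; rewrite map_map, (map_ext _ (fun x => x)) by (intros []; auto); apply map_id. }
    2:{ intros; apply length_map. }
    assert (sumL (all_paths m) (Aterm a j i (m - tgt)) <= 0) by (apply drift; auto; lia).
    assert (sumL (all_paths m) (fun x => Aterm a i j tgt (map negb x)) = sumL (all_paths m) (fun u => -1 * Aterm a j i (m - tgt) u)).
    { apply sumL_ext. intros u Hu. apply In_all_paths in Hu.
      unfold Aterm. rewrite count_negb_t, pp_negb. pose proof (count_len u).
      destruct (Nat.eqb_spec (count_b false u) tgt); destruct (Nat.eqb_spec (count_b true u) (m - tgt)); try lia.
      destruct u as [|b t]; simpl; [ring|]. rewrite sgn_negb, opp_IZR. ring. ring. }
    rewrite sumL_scal in H1. lra.
  - apply sumL_nonneg. intros u Hu. apply In_all_paths in Hu. unfold Aterm. pose proof (count_len u).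
    destruct (Nat.eqb_spec (count_b true u) tgt); [lia|lra]. Qed.

Lemma sumL_zero l f : (forall x, In x l -> f x = 0) -> sumL l f = 0.
Proof. induction l; intros H; [reflexivity|]. rewrite sumL_cons, IHl, H; simpl; auto. lra. intros; apply H; simpl; auto. Qed.

Fixpoint sdz (T c : Z) (q : list bool) : Z :=
  if Z.leb T (Z.abs c) then c else match q with nil => c | b :: t => sdz T (c + sgn b) t end.

Lemma sdz_snoc T q x : forall c, sdz T c (q ++ [x]) =
  (if Z.leb T (Z.abs (sdz T c q)) then sdz T c q else sdz T c q + sgn x)%Z.
Proof. induction q as [|b q IH]; intros c; simpl.
  - destruct (Z.leb T (Z.abs c)) eqn:E; [rewrite E; auto|]. destruct (Z.leb T (Z.abs (c + sgn x))); rewrite ?E; auto.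
  - destruct (Z.leb T (Z.abs c)) eqn:E; [rewrite E; auto|]. apply IH. Qed.

Lemma sdz_free T q : forall c, (Z.abs (sdz T c q) < T)%Z -> sdz T c q = (c + disp q)%Z.
Proof. induction q as [|b q IH]; intros c H; simpl in *.
  - destruct (Z.leb T (Z.abs c)); unfold disp; simpl; lia.
  - destruct (Z.leb_spec T (Z.abs c)). lia. rewrite IH by auto. rewrite disp_cons; lia. Qed.

Lemma sdz_hit T q : forall c k, (T <= Z.abs (c + disp (firstn k q)))%Z -> (T <= Z.abs (sdz T c q))%Z.
Proof. induction q as [|b q IH]; intros c k H; simpl.
  - rewrite firstn_nil in H. unfold disp in H; simpl in H. destruct (Z.leb T (Z.abs c)); lia.
  - destruct (Z.leb_spec T (Z.abs c)); auto. destruct k. simpl in H. unfold disp in H; simpl in H. lia.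
    simpl in H. rewrite disp_cons in H. apply (IH _ k). replace (c + sgn b + disp (firstn k q))%Z with (c + (sgn b + disp (firstn k q)))%Z by lia. auto. Qed.

Definition Bw a c (p : list bool) : R := if Nat.eqb (count_b true p) c then path_prob a 1 1 p else 0.

Definition Vt a c T r (p : list bool) : R :=
  if Nat.eqb (count_b true p) c then path_prob a 1 1 p * (IZR (sdz T 0 (firstn r p)))^2 else 0.

Definition gq T (q : list bool) : R := if Z.leb T (Z.abs (sdz T 0 q)) then 0 else IZR (sdz T 0 q).

Definition Gt a c T r (p : list bool) : R :=
  if Nat.eqb (count_b true p) c then path_prob a 1 1 p * gq T (firstn r p) * xi (skipn r p) else 0.

Lemma G_le a (Ha : 1 <= a) c T r s : (r + S s = 2 * c)%nat ->
  sumL (all_paths (r + S s)) (Gt a c T r) <= 0.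
Proof. intros HN. rewrite all_paths_split.
  replace 0 with (sumL (all_paths r) (fun _ => 0)).
  2:{ clear; induction (all_paths r); unfold sumL in *; simpl; auto. rewrite IHl; lra. }
  apply sumL_le. intros q Hq. apply In_all_paths in Hq.
  set (i := (1 + count_b true q)%nat). set (j := (1 + count_b false q)%nat).
  assert (E : sumL (all_paths (S s)) (fun u => Gt a c T r (q ++ u)) =
     path_prob a 1 1 q * gq T q *
     sumL (all_paths (S s)) (fun u => if Nat.eqb (count_b true q + count_b true u) c then path_prob a i j u * xi u else 0)).
  { rewrite <- sumL_scal. apply sumL_ext. intros u Hu. unfold Gt.
    rewrite <- Hq, firstn_app, skipn_app, Nat.sub_diag, firstn_all, skipn_all, firstn_O, app_nil_r.
    simpl. rewrite count_app. destruct (Nat.eqb _ c); [|ring]. rewrite pp_app. unfold i, j. ring. }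
  rewrite E. clear E.
  pose proof (count_len q) as Hl. rewrite Hq in Hl.
  destruct (Nat.le_gt_cases (count_b true q) c) as [Hc|Hc].
  2:{ rewrite sumL_zero. lra. intros u _. destruct (Nat.eqb_spec (count_b true q + count_b true u) c); [lia|auto]. }
  assert (E : sumL (all_paths (S s)) (fun u => if Nat.eqb (count_b true q + count_b true u) c then path_prob a i j u * xi u else 0)
     = sumL (all_paths (S s)) (Aterm a i j (c - count_b true q))).
  { apply sumL_ext; intros u _. unfold Aterm.
    destruct (Nat.eqb_spec (count_b true q + count_b true u) c); destruct (Nat.eqb_spec (count_b true u) (c - count_b true q)); auto; lia. }
  rewrite E; clear E.
  pose proof (pp_pos a q 1 1).
  unfold gq. destruct (Z.leb_spec T (Z.abs (sdz T 0 q))). lra.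
  rewrite (sdz_free T q 0) by lia. simpl Z.add.
  destruct (Z.lt_total (disp q) 0) as [Hd|[Hd|Hd]].
  - assert (0 <= sumL (all_paths (S s)) (Aterm a i j (c - count_b true q))).
    { apply drift'; auto; unfold i, j, disp in *; lia. }
    apply IZR_lt in Hd. rewrite Rmult_assoc. set (K := sumL _ _) in *. set (d := IZR (disp q)) in *.
    assert (d * K <= 0) by nra. set (w := path_prob a 1 1 q) in *. nra.
  - rewrite Hd. simpl. lra.
  - assert (sumL (all_paths (S s)) (Aterm a i j (c - count_b true q)) <= 0).
    { apply drift; auto; unfold i, j, disp in *; lia. }
    apply IZR_lt in Hd. rewrite Rmult_assoc. assert (IZR (disp q) * sumL (all_paths (S s)) (Aterm a i j (c - count_b true q)) <= 0) by nra. nra. Qed.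

Lemma V_step a (Ha : 1 <= a) c T r :
  sumL (all_paths (2 * c)) (Vt a c T (S r)) <= sumL (all_paths (2 * c)) (Vt a c T r) + sumL (all_paths (2 * c)) (Bw a c).
Proof. destruct (Nat.le_gt_cases (2 * c) r) as [Hr|Hr].
  - rewrite <- sumL_plus. apply sumL_le. intros p Hp. apply In_all_paths in Hp.
    unfold Vt, Bw. rewrite !firstn_all2 by lia. destruct (Nat.eqb _ c); [|lra].
    pose proof (pp_pos a p 1 1). lra.
  - destruct (2 * c - r)%nat as [|s] eqn:Es; [lia|]. replace (2 * c)%nat with (r + S s)%nat by lia.
    pose proof (G_le a Ha c T r s ltac:(lia)).
    assert (sumL (all_paths (r + S s)) (Vt a c T (S r)) <=
      sumL (all_paths (r + S s)) (fun p => Vt a c T r p + Bw a c p + 2 * Gt a c T r p)).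
    { apply sumL_le. intros p Hp. apply In_all_paths in Hp.
      unfold Vt, Bw, Gt. destruct (Nat.eqb _ c); [|lra].
      assert (Hsp : exists x t, skipn r p = x :: t) by (destruct (skipn r p) eqn:E;
        [apply (f_equal (@length bool)) in E; rewrite length_skipn in E; simpl in E; lia | eauto]).
      destruct Hsp as [x [t Ht]].
      assert (firstn (S r) p = firstn r p ++ [x]).
      { rewrite <- (firstn_skipn r p) at 1. rewrite Ht, firstn_app. rewrite length_firstn.
        replace (S r - Nat.min r (length p))%nat with 1%nat by lia. rewrite firstn_all2 by (rewrite length_firstn; lia). reflexivity. }
      rewrite H0, sdz_snoc, Ht. unfold gq. simpl xi. pose proof (pp_pos a p 1 1).
      destruct (Z.leb T _). rewrite Rmult_0_r, Rmult_0_l. lra.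
      rewrite plus_IZR. assert (IZR (sgn x) ^ 2 = 1) by (destruct x; simpl; ring). nra. }
    rewrite !sumL_plus, sumL_scal in H0. lra. Qed.

Lemma V_bound a (Ha : 1 <= a) c T r :
  sumL (all_paths (2 * c)) (Vt a c T r) <= INR r * sumL (all_paths (2 * c)) (Bw a c).
Proof. induction r.
  - simpl. replace (sumL _ (Vt a c T 0)) with 0. lra.
    replace 0 with (sumL (all_paths (2 * c)) (fun _ => 0)).
    2:{ clear; induction (all_paths (2 * c)); unfold sumL in *; simpl; auto. rewrite IHl; lra. }
    apply sumL_ext. intros p _. unfold Vt. simpl. destruct (Z.leb T 0); destruct (Nat.eqb _ c); simpl; ring.
  - pose proof (V_step a Ha c T r). rewrite S_INR. lra. Qed.

Lemma hit_bound a (Ha : 1 <= a) c T r : (1 <= T)%Z ->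
  sumL (all_paths (2 * c)) (fun p => if Z.leb T (Z.abs (sdz T 0 (firstn r p))) then Bw a c p else 0) * (IZR T)^2
  <= INR r * sumL (all_paths (2 * c)) (Bw a c).
Proof. intros HT. eapply Rle_trans; [|apply (V_bound a Ha c T r)].
  rewrite Rmult_comm, <- sumL_scal. apply sumL_le. intros p _. unfold Vt, Bw.
  destruct (Z.leb_spec T (Z.abs (sdz T 0 (firstn r p)))); destruct (Nat.eqb _ c); try lra.
  - pose proof (pp_pos a p 1 1).
    assert (IZR T ^ 2 <= IZR (sdz T 0 (firstn r p)) ^ 2).
    { rewrite <- (pow2_abs (IZR (sdz _ _ _))), <- abs_IZR. apply pow_incr. split. apply IZR_le; lia. apply IZR_le; lia. }
    set (w := path_prob a 1 1 p) in *. set (z := IZR (sdz _ _ _)) in *. nra.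
  - pose proof (pp_pos a p 1 1). pose proof (pow2_ge_0 (IZR (sdz T 0 (firstn r p)))). nra. Qed.

Lemma Int_part_mono x y : x <= y -> (Int_part x <= Int_part y)%Z.
Proof. intros H. destruct (base_Int_part x). destruct (archimed y).
  unfold Int_part at 2. assert (IZR (Int_part x) < IZR (up y)) by lra. apply lt_IZR in H4. lia. Qed.

Lemma Int_part_nonneg y : 0 <= y -> (0 <= Int_part y)%Z.
Proof. intros H. destruct (base_Int_part y). assert (-1 < IZR (Int_part y)) by lra. apply lt_IZR in H2. lia. Qed.

Lemma INR_to_nat z : (0 <= z)%Z -> INR (Z.to_nat z) = IZR z.
Proof. intros. rewrite INR_IZR_INZ, Z2Nat.id; auto. Qed.

Lemma count_rep_t k : count_b true (repeat true k) = k /\ count_b false (repeat true k) = 0%nat.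
Proof. induction k; [split; reflexivity|]. simpl repeat. rewrite count_cons_t, count_cons_f. lia. Qed.
Lemma count_rep_f k : count_b true (repeat false k) = 0%nat /\ count_b false (repeat false k) = k.
Proof. induction k; [split; reflexivity|]. simpl repeat. rewrite count_cons_t, count_cons_f. lia. Qed.

Lemma W_pos a c : 0 < sumL (all_paths (2 * c)) (Bw a c).
Proof. set (p0 := repeat true c ++ repeat false c).
  assert (Hp : In p0 (all_paths (2 * c))). { apply In_all_paths. unfold p0. rewrite length_app, !repeat_length. lia. }
  assert (0 < Bw a c p0).
  { unfold Bw. unfold p0. rewrite count_app. destruct (count_rep_t c) as [H H0]. destruct (count_rep_f c) as [H1 H2].
    rewrite H, H1. replace (c + 0)%nat with c by lia. rewrite Nat.eqb_refl. apply pp_pos. }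
  eapply Rlt_le_trans; [apply H|]. apply sumL_ge_elt; auto.
  intros y _. unfold Bw. destruct (Nat.eqb _ _); [apply Rlt_le, pp_pos|lra]. Qed.

Theorem mainTheorem19 :
  forall (alpha : R), 1 < alpha ->
  forall (eps eta : R), 0 < eps -> 0 < eta ->
  exists delta : R, 0 < delta /\ delta <= 1 /\
    forall n : nat, (1 <= n)%nat ->
      condPr alpha n
        (fun p => exists t : R, 0 <= t <= delta /\
           Rabs (IZR (DeltaXY p (Z.to_nat (Int_part (2 * INR n * t)))) / sqrt (INR n)) > eps)
      <= eta.
Proof.
  intros alpha Halpha eps eta Heps Heta.
  set (delta := Rmin 1 (eta * eps ^ 2 / 2)).
  assert (Hd1 : delta <= 1) by apply Rmin_l.
  assert (Hd2 : delta <= eta * eps ^ 2 / 2) by apply Rmin_r.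
  assert (Hd0 : 0 < delta). { unfold delta. apply Rmin_glb_lt. lra. pose proof (pow_lt eps 2 Heps). nra. }
  exists delta. split; [auto|split; [auto|]].
  intros n Hn. set (c := (n - 1)%nat). assert (HN : (2 * n - 2)%nat = (2 * c)%nat) by (unfold c; lia).
  assert (Ha : 1 <= alpha) by lra.
  assert (Hnpos : 0 < INR n) by (apply lt_0_INR; lia).
  assert (Hsq : 0 < sqrt (INR n)) by (apply sqrt_lt_R0; auto).
  set (x := eps * sqrt (INR n)).
  assert (Hx : 0 < x) by (unfold x; nra).
  set (T := up x). destruct (archimed x) as [HT1 HT2]. fold T in HT1, HT2.
  assert (HT : (1 <= T)%Z). { assert (0 < IZR T) by lra. apply lt_IZR in H. lia. }
  set (r0 := Z.to_nat (Int_part (2 * INR n * delta))).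
  set (W := sumL (all_paths (2 * c)) (Bw alpha c)).
  assert (HW : 0 < W) by apply W_pos.
  set (Hs := sumL (all_paths (2 * c)) (fun p => if Z.leb T (Z.abs (sdz T 0 (firstn r0 p))) then Bw alpha c p else 0)).
  assert (Hbound := hit_bound alpha Ha c T r0 HT). fold W Hs in Hbound.
  assert (Hden : probE alpha n (bingo n) = W).
  { unfold probE, W. rewrite HN. fold (sumL (all_paths (2 * c)) (fun p => if excluded_middle_informative (bingo n p) then weight alpha p else 0)).
    apply sumL_ext. intros p _. unfold Bw, bingo. fold c.
    destruct (excluded_middle_informative _); destruct (Nat.eqb_spec (count_b true p) c); try contradiction; reflexivity. }
  assert (Hnum : probE alpha n (fun p => bingo n p /\ exists t : R, 0 <= t <= delta /\
           Rabs (IZR (DeltaXY p (Z.to_nat (Int_part (2 * INR n * t)))) / sqrt (INR n)) > eps) <= Hs).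
  { unfold probE, Hs. rewrite HN. fold (sumL (all_paths (2 * c)) (fun p => if excluded_middle_informative (bingo n p /\ exists t : R, 0 <= t <= delta /\
           Rabs (IZR (DeltaXY p (Z.to_nat (Int_part (2 * INR n * t)))) / sqrt (INR n)) > eps) then weight alpha p else 0)).
    apply sumL_le. intros p _. destruct (excluded_middle_informative _) as [[Hb [t [Ht Habs]]]|].
    2:{ destruct (Z.leb _ _); [|lra]. unfold Bw. destruct (Nat.eqb _ _); [apply Rlt_le, pp_pos|lra]. }
    unfold bingo in Hb. fold c in Hb. unfold Bw. rewrite Hb, Nat.eqb_refl.
    set (K := Z.to_nat (Int_part (2 * INR n * t))) in *.
    assert (HK : (K <= r0)%nat).
    { unfold K, r0. apply Z2Nat.inj_le. apply Int_part_nonneg. nra. apply Int_part_nonneg. nra.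
      apply Int_part_mono. nra. }
    set (d := disp (firstn (K - 2) p)).
    assert (Hdd : DeltaXY p K = d) by reflexivity. rewrite Hdd in Habs.
    assert (Hd : (T <= Z.abs d)%Z).
    { unfold Rdiv in Habs. rewrite Rabs_mult, Rabs_inv, (Rabs_right (sqrt _)) in Habs by lra.
      assert (x < Rabs (IZR d)).
      { unfold x. apply (Rmult_lt_reg_r (/ sqrt (INR n))). apply Rinv_0_lt_compat; auto.
        field_simplify; lra. }
      rewrite <- abs_IZR in H. assert (IZR T - 1 < IZR (Z.abs d)) by lra.
      rewrite <- minus_IZR in H0. apply lt_IZR in H0. lia. }
    assert (Hhit : (T <= Z.abs (sdz T 0 (firstn r0 p)))%Z).
    { apply (sdz_hit T _ 0 (K - 2)). rewrite firstn_firstn. replace (Nat.min (K - 2) r0) with (K - 2)%nat by lia.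
      simpl. fold d. auto. }
    apply Z.leb_le in Hhit. rewrite Hhit. unfold weight. lra. }
  unfold condPr. rewrite Hden.
  apply (Rle_trans _ (Hs / W)). { apply Rmult_le_compat_r. apply Rlt_le, Rinv_0_lt_compat; auto. auto. }
  assert (HTx : x ^ 2 <= IZR T ^ 2) by (apply pow_incr; lra).
  assert (Hx2 : x ^ 2 = eps ^ 2 * INR n). { unfold x. rewrite Rpow_mult_distr, pow2_sqrt; lra. }
  assert (Hr0 : INR r0 <= 2 * INR n * delta).
  { unfold r0. rewrite INR_to_nat. apply base_Int_part. apply Int_part_nonneg. nra. }
  apply (Rmult_le_reg_r W); auto. unfold Rdiv. rewrite Rmult_assoc, Rinv_l, Rmult_1_r by lra.
  assert (Hs * IZR T ^ 2 <= 2 * INR n * delta * W) by nra.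
  assert (0 <= Hs). { unfold Hs. apply sumL_nonneg. intros. destruct (Z.leb _ _); [|lra]. unfold Bw; destruct (Nat.eqb _ _); [apply Rlt_le, pp_pos|lra]. }
  assert (Hs * (eps ^ 2 * INR n) <= 2 * INR n * delta * W) by nra.
  assert (0 < eps ^ 2) by (apply pow_lt; auto).
  assert (Hs * eps ^ 2 <= 2 * delta * W).
  { apply (Rmult_le_reg_r (INR n)); auto. nra. }
  apply (Rmult_le_reg_r (eps ^ 2)); auto. nra.
Qed.
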